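(* Let $n\ge 3$ and $x\in S_n$ avoid $123$. Then there exists $1\le i\le n-2$ with $|\mathrm{Act}_i(x;123)|=|\mathrm{Act}_{i+1}(x;123)|\le|\mathrm{Act}_{i+2}(x;123)|$ if and only if $x$ contains the bivincular pattern $132^{\star}$.
   Context: For $w=w_1\cdots w_{m}\in S_{m}$ and $1\le i\le m+1$, let $w^i$ be the permutation obtained by inserting $m+1$ immediately before $w_i$ (at the end if $i=m+1$). For a pattern $y$, site $i$ of $w$ is active with respect to $y$ if $w^i$ avoids $y$ (has no subsequence order-isomorphic to $y$). For $x\in S_n$ and $1\le k\le n$, let $\mathrm{small}_k(x)$ be the subsequence of $x$ formed by the entries $1,\dots,k$ (a permutation in $S_k$). For $1\le j\le n$, $\mathrm{Act}_j(x;y)$ is the set of active sites of $\mathrm{small}_{n+1-j}(x)$ with respect to $y$. (The word $|\mathrm{Act}_1(x;y)|\cdots|\mathrm{Act}_{n-1}(x;y)|$ is West's signature of $x$.) An occurrence of the bivincular pattern $132^{\star}$ in $x$ is a pair of indices $a<b<n$ with $x_a<x_{b+1}$ and $x_b=x_{b+1}+1$. *)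

(* Defs.v *)
(* Permutations of [n] are represented as sequences of
   naturals that are permutations of [:: 1; ...; n] (one-line notation). *)
From mathcomp Require Import all_boot.
Set Implicit Arguments. Unset Strict Implicit. Unset Printing Implicit Defensive.

(* 1-based entry access: xval w i = w_i *)
Definition xval (w : seq nat) (i : nat) : nat := nth 0 w i.-1.

Definition order_iso (s y : seq nat) : bool :=
  (size s == size y) &&
  all (fun i => all (fun j => (nth 0 s i < nth 0 s j) == (nth 0 y i < nth 0 y j))
                    (iota 0 (size y))) (iota 0 (size y)).

Fixpoint subseqs (w : seq nat) : seq (seq nat) :=
  if w is a :: w' then [seq a :: s | s <- subseqs w'] ++ subseqs w' else [:: [::]].

Definition contains (w y : seq nat) : bool :=
  has (fun s => order_iso s y) (subseqs w).

Definition avoids (w y : seq nat) : bool := ~~ contains w y.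

(* w^i : insert m+1 (m = size w) immediately before w_i (at end if i = m+1) *)
Definition ins (w : seq nat) (i : nat) : seq nat :=
  take i.-1 w ++ (size w).+1 :: drop i.-1 w.

Definition active_sites (w y : seq nat) : seq nat :=
  [seq i <- iota 1 (size w).+1 | avoids (ins w i) y].

Definition small (k : nat) (x : seq nat) : seq nat := [seq v <- x | v <= k].

Definition Act (j : nat) (x y : seq nat) : seq nat :=
  active_sites (small ((size x).+1 - j) x) y.

Definition contains_132star (x : seq nat) : Prop :=
  exists a b, [/\ 1 <= a, a < b, b < size x,
                  xval x a < xval x b.+1 & xval x b = (xval x b.+1).+1].

(* Main.v *)
Require Import Defs.
From mathcomp Require Import all_boot zify.

Definition c123 (w : seq nat) : Prop :=
  exists a b c, subseq [:: a; b; c] w /\ a < b < c.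

Lemma mem_subseqs (s w : seq nat) : (s \in subseqs w) = subseq s w.
Proof.
elim: w s => [|a w IH] s /=.
  by case: s.
rewrite mem_cat IH.
case: s => [|b s] /=; first by rewrite sub0seq orbT.
case: (eqVneq b a) => [->|ne].
  have inj : injective (cons a) by move=> u v [].
  rewrite (mem_map inj) IH.
  by apply/orP/idP => [[//|/cons_subseq//]|->]; left.
have -> : (b :: s \in [seq a :: s0 | s0 <- subseqs w]) = false.
  by apply/mapP => -[t _ [e _]]; rewrite e eqxx in ne.
by [].
Qed.

Lemma order_iso3 s : order_iso s [:: 1; 2; 3] =
  (if s is [:: a; b; c] then (a < b) && (b < c) else false).
Proof.
case: s => [|a [|b [|c [|d s]]]] //.
rewrite /order_iso /= !ltnn /=.
case: (ltngtP a b) => hab; case: (ltngtP b c) => hbc; case: (ltngtP a c) => hac //=; lia.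
Qed.

Lemma containsP w : contains w [:: 1; 2; 3] <-> c123 w.
Proof.
split.
  case/hasP => s; rewrite mem_subseqs order_iso3.
  case: s => [|a [|b [|c [|d s]]]] // hs /andP[h1 h2].
  by exists a, b, c; rewrite hs h1 h2.
case=> a [b [c [hs /andP[h1 h2]]]].
by apply/hasP; exists [:: a; b; c]; rewrite ?mem_subseqs ?order_iso3 ?h1 ?h2.
Qed.

Lemma c123_sub w w' : subseq w w' -> c123 w -> c123 w'.
Proof.
move=> sw [a [b [c [h1 h2]]]]; exists a, b, c; split=> //.
exact: subseq_trans sw.
Qed.

Lemma subseq_cat_split {s s1 s2 : seq nat} : subseq s (s1 ++ s2) ->
  exists u v, [/\ s = u ++ v, subseq u s1 & subseq v s2].
Proof.
elim: s1 s => [|y s1 IH] s /=.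
  by move=> h; exists [::], s.
case: s => [|x s] /=.
  by move=> _; exists [::], [::]; rewrite sub0seq.
case: (eqVneq x y) => [->|ne] h.
  have [u [v [-> hu hv]]] := IH _ h.
  by exists (y :: u), v; rewrite /= eqxx.
have [u [v [e hu hv]]] := IH _ h.
exists u, v; split=> //.
exact: subseq_trans hu (subseq_cons _ _).
Qed.

Fixpoint D (s : seq nat) : nat :=
  match s with
  | a :: t => match t with b :: _ => if b < a then (D t).+1 else 1 | [::] => 1 end
  | [::] => 0
  end.

Lemma D_le s : D s <= size s.
Proof.
elim: s => [|a [|b t] IH] //=.
by case: ifP => //= _; rewrite ltnS.
Qed.

Lemma D_cons M q : all (fun v => v < M) q -> D (M :: q) = (D q).+1.
Proof. by case: q => [|b q] //= /andP[-> _]. Qed.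

Lemma D_cat a p r : sorted gtn (a :: p) ->
  D ((a :: p) ++ r) = size (a :: p) +
    (if r is b :: _ then (if b < last a p then D r else 0) else 0).
Proof.
elim: p a => [|c p IH] a /=.
  case: r => [|b r] //=. by case: ifP; rewrite ?addn0 ?add1n.
case/andP => ca sp.
have := IH c sp; rewrite /= => e.
by rewrite ca e addSn.
Qed.

Lemma take_sorted_D w j : j <= size w -> sorted gtn (take j w) = (j <= D w).
Proof.
elim: w j => [|a t IH] [|j] //= hj.
case: t IH hj => [|b t'] IH hj.
  by case: j hj.
case: j hj => [|j] hj /=; first by case: ifP.
have := IH j.+1 hj; rewrite /= => ->.
by case: ifP => //= _; case: j {hj IH}.
Qed.

Lemma not_sorted_asc p : uniq p -> ~~ sorted gtn p ->
  exists a b, subseq [:: a; b] p /\ a < b.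
Proof.
elim: p => [|a t IH] //=.
case: t IH => [|b t'] IH //= /andP[na ut] /negP.
case: (ltnP b a) => hba /=.
  move=> /negP ns; have [c [d [hs hcd]]] := IH ut ns.
  by exists c, d; split=> //; apply: subseq_trans hs (subseq_cons _ _).
move=> _; exists a, b; split.
  by rewrite /= eqxx /= eqxx sub0seq.
rewrite ltn_neqAle hba andbT; apply/eqP => e.
by move: na; rewrite e inE eqxx.
Qed.

Lemma ins_L1 p q M : all (fun v => v < M) p -> uniq p -> ~~ sorted gtn p ->
  c123 (p ++ M :: q).
Proof.
move=> ap up ns; have [a [b [hs hab]]] := @not_sorted_asc p up ns.
exists a, b, M; split.
  have -> : [:: a; b; M] = [:: a; b] ++ [:: M] by [].
  by apply: cat_subseq => //; rewrite /= eqxx sub0seq.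
rewrite hab /=.
have : b \in p by apply: (mem_subseq hs); rewrite !inE eqxx orbT.
by move/(allP ap).
Qed.

Lemma ins_L2 p q M : all (fun v => v < M) q -> sorted gtn p ->
  c123 (p ++ M :: q) -> c123 (p ++ q).
Proof.
move=> aq sp [a [b [c [hs /andP[hab hbc]]]]].
have [u [v [e hu hv]]] := subseq_cat_split hs.
have vq : subseq v q -> c123 (p ++ q).
  by move=> h; exists a, b, c; rewrite e hab hbc; split=> //; apply: cat_subseq.
case: v e hu hv vq => [|z v] e hu hv vq.
  by apply: vq; rewrite sub0seq.
have : subseq (if z == M then v else z :: v) q by [].
case: (eqVneq z M) => [ez|ne] hv'; last exact: vq.
rewrite ez in e; clear hv.
case: u e hu => [|a1 [|b1 [|c1 [|d1 u]]]] //=.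
- case=> e1 ev _; subst.
  have : c \in q by apply: (mem_subseq hv'); rewrite !inE eqxx orbT.
  move/(allP aq) => /= hcM; lia.
- case=> e1 e2 ev _; subst.
  have : c \in q by apply: (mem_subseq hv'); rewrite !inE eqxx.
  move/(allP aq) => /= hcM; lia.
- case=> e1 e2 e3 ev hu; subst.
  have : sorted gtn [:: a1; b1] by apply: subseq_sorted hu sp => x y z /= h1 h2; apply: ltn_trans h1.
  by rewrite /= andbT => h; lia.
Qed.

Lemma count_iota_le m d : d <= m ->
  size [seq i <- iota 1 m.+1 | i.-1 <= d] = d.+1.
Proof.
move=> hd.
have -> : m.+1 = d.+1 + (m - d) by lia.
rewrite iotaD filter_cat size_cat.
rewrite [X in size X + _](@eq_in_filter _ _ predT); last first.
  by move=> i; rewrite mem_iota => /andP[h1 h2] /=; lia.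
rewrite [X in _ + size X](@eq_in_filter _ _ pred0); last first.
  by move=> i; rewrite mem_iota => /andP[h1 h2] /=; lia.
by rewrite filter_predT filter_pred0 size_iota addn0.
Qed.

Lemma avoid_ins w i : uniq w -> ~ c123 w -> all (fun v => v <= size w) w ->
  avoids (ins w i) [:: 1; 2; 3] = sorted gtn (take i.-1 w).
Proof.
move=> uw nw aw; rewrite /avoids /ins.
have aM : all (fun v => v < (size w).+1) w.
  by apply/allP => v /(allP aw).
case: (boolP (sorted gtn (take i.-1 w))) => hs.
  apply/negP => /containsP h; apply: nw.
  rewrite -(cat_take_drop i.-1 w); apply: ins_L2 h => //.
  by apply/allP => v /mem_drop /(allP aM).
apply: negbF; apply/containsP; apply: ins_L1 => //.
  by apply/allP => v /mem_take /(allP aM).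
exact: take_uniq.
Qed.

Lemma F_size w : uniq w -> ~ c123 w -> all (fun v => v <= size w) w ->
  size (active_sites w [:: 1; 2; 3]) = (D w).+1.
Proof.
move=> uw nw aw; rewrite /active_sites.
rewrite (@eq_in_filter _ _ (fun i => i.-1 <= D w)).
  by apply: count_iota_le; apply: D_le.
move=> i; rewrite mem_iota => /andP[h1 h2].
rewrite avoid_ins // take_sorted_D //; lia.
Qed.

Lemma small_sub k x : subseq (small k x) x.
Proof. exact: filter_subseq. Qed.

Lemma decomp x k X1 X2 : 0 < k -> uniq x -> ~ c123 x -> x = X1 ++ k :: X2 ->
  [/\ small k x = small k X1 ++ k :: small k X2,
      small k.-1 x = small k X1 ++ small k X2,
      sorted gtn (small k X1),
      all (fun v => v < k) (small k X1) &
      all (fun v => v < k) (small k X2)].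
Proof.
move=> kp ux nx ex.
have : uniq (X1 ++ k :: X2) by rewrite -ex.
rewrite cat_uniq /= => /and4P[u1 hk k2' _].
move: hk; rewrite negb_or => /andP[k1 k2].
have h1 : small k x = small k X1 ++ k :: small k X2.
  by rewrite ex /small filter_cat /= leqnn.
have a1 : all (fun v => v < k) (small k X1).
  apply/allP => v; rewrite mem_filter => /andP[hv vX].
  rewrite ltn_neqAle hv andbT; apply/eqP => e; subst.
  by rewrite vX in k1.
have a2 : all (fun v => v < k) (small k X2).
  apply/allP => v; rewrite mem_filter => /andP[hv vX].
  rewrite ltn_neqAle hv andbT; apply/eqP => e; subst.
  by rewrite vX in k2'.
split=> //.
- rewrite ex /small filter_cat /=.
  have -> : (k <= k.-1) = false by apply/negbTE; rewrite -ltnNge; lia.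
  congr (_ ++ _); apply: eq_in_filter => v vX.
    have : v != k by apply/eqP => e; subst; rewrite vX in k1.
    clear; lia.
  have : v != k by apply/eqP => e; subst; rewrite vX in k2'.
  clear; lia.
- apply/negPn/negP => ns; apply: nx.
  apply: (c123_sub _ _ (small_sub k x)); rewrite h1.
  apply: ins_L1 => //.
  exact: filter_uniq.
Qed.

Lemma memx n x v : perm_eq x (iota 1 n) -> (v \in x) = (0 < v <= n).
Proof. by move=> pe; rewrite (perm_mem pe) mem_iota add1n ltnS. Qed.

Lemma split_ex (x : seq nat) k : k \in x -> exists X1 X2, x = X1 ++ k :: X2.
Proof. by case/splitPr => X1 X2; exists X1, X2. Qed.

Lemma f_eq n x k : perm_eq x (iota 1 n) -> ~ c123 x -> k <= n ->
  size (Act (n.+1 - k) x [:: 1; 2; 3]) = (D (small k x)).+1.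
Proof.
move=> pe nx kn.
rewrite /Act (perm_size pe) size_iota.
have -> : n.+1 - (n.+1 - k) = k by lia.
apply: F_size.
- apply: filter_uniq; by rewrite (perm_uniq pe) iota_uniq.
- by move=> h; apply: nx; apply: c123_sub (small_sub k x) h.
have hs : k <= size (small k x).
  have := @uniq_leq_size _ (iota 1 k) (small k x) (iota_uniq 1 k).
  rewrite size_iota; apply => v; rewrite mem_iota mem_filter => hv.
  rewrite (memx _ _ v pe); apply/andP; split; lia.
apply/allP => v; rewrite mem_filter => /andP[hv _]; exact: leq_trans hv hs.
Qed.

Lemma D_pos a s : 0 < D (a :: s).
Proof. by case: s => [|b s] //=; case: ifP. Qed.

Lemma gtn_trans : transitive gtn.
Proof. by move=> y x z /= h1 h2; apply: ltn_trans h2 h1. Qed.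

Lemma arith_left (A : nat -> nat) n v : 1 < v -> v < n ->
  A (n.+1 - v.+1) = A (n.+1 - v) -> A (n.+1 - v) <= A (n.+1 - v.-1) ->
  exists i, [/\ 1 <= i, i <= n - 2, A i = A i.+1 & A i.+1 <= A i.+2].
Proof.
move=> v2 vn e1 e2; exists (n - v); split; try lia.
- rewrite (_ : n - v = n.+1 - v.+1); last lia.
  by rewrite (_ : (n.+1 - v.+1).+1 = n.+1 - v); last lia.
- rewrite (_ : (n - v).+1 = n.+1 - v); last lia.
  by rewrite (_ : (n.+1 - v).+1 = n.+1 - v.-1); last lia.
Qed.

Lemma dir_left n x : perm_eq x (iota 1 n) -> ~ c123 x -> contains_132star x ->
  exists i, [/\ 1 <= i, i <= n - 2,
       size (Act i x [:: 1; 2; 3]) = size (Act i.+1 x [:: 1; 2; 3]) &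
       size (Act i.+1 x [:: 1; 2; 3]) <= size (Act i.+2 x [:: 1; 2; 3])].
Proof.
move=> pe nx [a [b [ha hab hbn hlt heq]]].
have ux : uniq x by rewrite (perm_uniq pe) iota_uniq.
set v := xval x b.+1 in hlt heq; set u := xval x a in hlt.
set X1 := take b.-1 x; set Z := drop b.+1 x.
have ex : x = X1 ++ v.+1 :: v :: Z.
  rewrite -{1}(cat_take_drop b.-1 x); congr (_ ++ _).
  rewrite (drop_nth 0); last by lia.
  have -> : b.-1.+1 = b by lia.
  rewrite (drop_nth 0) //.
  by rewrite /v /xval /= -heq /xval.
have uX : u \in X1.
  have -> : u = nth 0 X1 a.-1 by rewrite nth_take //; lia.
  have hb : b.-1 < size x by apply: leq_ltn_trans (leq_pred b) hbn.
  by apply: mem_nth; rewrite /X1 size_take hb; lia.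
have ux' : u \in x by rewrite ex mem_cat uX.
have vx : v.+1 \in x by rewrite ex mem_cat inE eqxx orbT.
move: ux' vx; rewrite !(memx _ _ _ pe) => /andP[u1 un] /andP[v1 vn].
have vX : v \notin X1.
  by move: ux; rewrite ex cat_uniq => /and3P[_ /hasPn /(_ v) h _]; apply: h; rewrite !inE eqxx orbT.
have [h1 h2 sp a1 a2] := decomp _ _ _ _ (ltn0Sn v) ux nx ex.
have ex' : x = (X1 ++ [:: v.+1]) ++ v :: Z by rewrite ex -catA.
have v0 : 0 < v by lia.
have [g1 g2 sp' b1 b2] := decomp _ _ _ _ v0 ux nx ex'.
rewrite /= in h2.
have sv : small v.+1 (v :: Z) = v :: small v.+1 Z by rewrite /small /= leqnSn.
rewrite sv in h1; rewrite leqnSn in h2.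
have lp : forall w, w \in small v.+1 X1 -> w < v.
  move=> w hw'; have hw := allP a1 w hw'; move: hw'; rewrite mem_filter => /andP[_ wX].
  have : w != v by apply/eqP => e; move: vX; rewrite -e wX.
  move: hw => /=; clear; lia.
have Ek : D (small v.+1 x) = D (small v x).
  rewrite h1 h2.
  have : u \in small v.+1 X1 by rewrite mem_filter uX andbT; apply: leq_trans (ltnW hlt) (leqnSn v).
  case: (small v.+1 X1) sp a1 lp => [|a0 p0] // sp a1 lp _.
  have t := lp _ (mem_last a0 p0).
  by rewrite !D_cat // !ltnNge (ltnW t) /= leqW // ltnW.
have Ev : D (small v x) <= D (small v.-1 x).
  rewrite g1 g2.
  have : u \in small v (X1 ++ [:: v.+1]) by rewrite mem_filter mem_cat uX andbT; apply: ltnW.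
  case: (small v (X1 ++ [:: v.+1])) sp' b1 => [|c0 q0] // sp' b1 _.
  have t := allP b1 _ (mem_last c0 q0).
  rewrite !D_cat // [X in _ + X <= _](_ : _ = 0); first by rewrite addn0 leq_addr.
  by rewrite ltnNge (ltnW t).
have F1 := f_eq n x v.+1 pe nx vn.
have F2 := f_eq n x v pe nx (ltnW vn).
have F3 := f_eq n x v.-1 pe nx (leq_trans (leq_pred v) (ltnW vn)).
have v2 : 1 < v by apply: leq_ltn_trans u1 hlt.
apply: (@arith_left (fun j => size (Act j x [:: 1; 2; 3])) n v v2 vn).
  by rewrite /= F1 F2 Ek.
by rewrite /= F2 F3.
Qed.
Lemma dir_right n x : perm_eq x (iota 1 n) -> ~ c123 x ->
  (exists i, [/\ 1 <= i, i <= n - 2,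
       size (Act i x [:: 1; 2; 3]) = size (Act i.+1 x [:: 1; 2; 3]) &
       size (Act i.+1 x [:: 1; 2; 3]) <= size (Act i.+2 x [:: 1; 2; 3])]) ->
  contains_132star x.
Proof.
move=> pe nx [i [i1 i2 e1 e2]].
have ux : uniq x by rewrite (perm_uniq pe) iota_uniq.
have [k [ik k3 kn]] : exists k, [/\ i = n.+1 - k, 3 <= k & k <= n].
  by exists (n.+1 - i); split; lia.
have e2i : i.+2 = n.+1 - k.-1.-1 by move: ik k3 kn; clear; lia.
have e1i : i.+1 = n.+1 - k.-1 by move: ik k3 kn; clear; lia.
have k1p : 0 < k.-1 by move: k3; clear; lia.
have F1 := f_eq n x k pe nx kn.
have F2 := f_eq n x k.-1 pe nx (leq_trans (leq_pred k) kn).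
have F3 := f_eq n x k.-1.-1 pe nx (leq_trans (leq_pred _) (leq_trans (leq_pred k) kn)).
rewrite e2i in e2; rewrite e1i in e1 e2.
rewrite ik F1 F2 in e1; rewrite F2 F3 in e2.
move: e1 e2 => /eqP; rewrite eqSS => /eqP E1; rewrite ltnS => E2.
have kx : k \in x by rewrite (memx _ _ _ pe) kn andbT (ltnW (ltnW k3)).
have k1x : k.-1 \in x by rewrite (memx _ _ _ pe) k1p (leq_trans (leq_pred k) kn).
have [X1 [X2 ex]] := split_ex _ _ kx.
have [Y1 [Y2 ey]] := split_ex _ _ k1x.
have [h1 h2 sp a1 a2] := decomp _ _ _ _ (ltnW (ltnW k3)) ux nx ex.
have [g1 g2 sp' b1 b2] := decomp _ _ _ _ k1p ux nx ey.
have nothead : forall r, small k.-1 x <> k.-1 :: r.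
  move=> r er.
  have u1 : uniq (small k.-1 x) by apply: filter_uniq.
  move: E2 u1 er; rewrite g1 g2.
  case: (small k.-1 Y1) => [|c0 p0'].
    by rewrite !cat0s D_cons // ltnn.
  move=> _ /= /andP[/negP nn _] [ec _]; apply: nn.
  by rewrite ec mem_cat inE eqxx orbT.
have uk : uniq (small k x) by apply: filter_uniq.
have nk : ~ c123 (small k x) by move=> h; apply: nx; apply: c123_sub (small_sub k x) h.
have k1s : k.-1 \in small k.-1 x by rewrite mem_filter leqnn k1x.
move: E1 uk nk k1s nothead; rewrite h1 h2.
case ep : (small k X1) sp a1 => [|a0 p0] sp a1.
  by rewrite !cat0s D_cons // => E; case: (n_Sn _ (esym E)).
set t := last a0 p0.
have tk : t < k by apply: (allP a1); apply: mem_last.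
have tX : t \in X1 by move: (mem_last a0 p0); rewrite -ep mem_filter => /andP[].
have hA : k.-1 \in a0 :: p0 -> a0 = k.-1.
  rewrite inE => /orP[/eqP -> //|h].
  have := allP (order_path_min gtn_trans sp) _ h.
  have := allP a1 a0 (mem_head _ _).
  move=> /= ha hb; exfalso; move: ha hb; clear; lia.
have uk' : uniq (small k x) by apply: filter_uniq.
rewrite h1 ep in uk'.
rewrite !D_cat // ltnNge (ltnW tk) /= addn0.
case eq : (small k X2) a2 uk' => [|b q0] a2 uk'.
  rewrite cats0 => _ _ _ k1s nh.
  by case: (nh p0); rewrite (hA k1s).
move=> E1 _ _ k1s nh.
move: k1s; rewrite -cat_cons mem_cat => /orP[k1s|k1s].
  by case: (nh (p0 ++ b :: q0)); rewrite (hA k1s).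
have nbt : ~~ (b < t).
  apply/negP => hb; move: E1; rewrite -/t hb => /eqP.
  by rewrite -{1}(addn0 (size p0).+1) eqn_add2l eq_sym => /eqP h; move: (D_pos b q0); rewrite h.
have tb : t != b.
  apply/eqP => e; move: uk'; rewrite cat_uniq => /and3P[_ hh _].
  move/hasPn: hh => /(_ b); rewrite !inE eqxx orbT => /(_ isT).
  by move=> /negP; apply; rewrite -e -in_cons; exact: mem_last.
have ltb : t < b by move: nbt tb; clear; lia.
have bk : b < k by apply: (allP a2); rewrite inE eqxx.
case: (eqVneq b k.-1) => [eb|nb]; last first.
  exfalso; apply: nx; apply: c123_sub (small_sub k x) _.
  move: k1s; rewrite inE eq_sym (negbTE nb) /= => k1s.
  have bk1 : b < k.-1 by move: bk nb; clear; lia.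
  exists t, b, k.-1; split; last by rewrite ltb bk1.
  rewrite h1 ep eq.
  have -> : [:: t; b; k.-1] = [:: t] ++ [:: b; k.-1] by [].
  apply: cat_subseq; first by rewrite sub1seq mem_last.
  apply: subseq_trans (subseq_cons _ _).
  by rewrite /= eqxx sub1seq.
subst b.
case eX2 : X2 eq => [|y X2'] eq; first by [].
move: eq; rewrite /small /=; case: leqP => hy; last first.
  move=> _; exfalso; apply: nx.
  exists t, k, y; split; last by rewrite tk hy.
  rewrite ex eX2.
  have -> : [:: t; k; y] = [:: t] ++ [:: k; y] by [].
  apply: cat_subseq; first by rewrite sub1seq.
  by rewrite /= eqxx /= eqxx sub0seq.
case=> ey' _; subst y.
have ex2 : x = X1 ++ [:: k, k.-1 & X2'] by rewrite ex eX2.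
exists (index t X1).+1, (size X1).+1.
have it : index t X1 < size X1 by rewrite index_mem.
have sx : size x = size X1 + (size X2').+2 by rewrite ex2 size_cat.
rewrite /xval /= ex2 !nth_cat it nth_index // ltnn subnn (ltnNge (size X1).+1 (size X1)) leqnSn /= subSn // subnn /=.
split=> //.
- by rewrite size_cat /= !addnS !ltnS leq_addr.
- by rewrite prednK //; apply: ltnW (ltnW k3).
Qed.

Theorem theorem3p12 (n : nat) (x : seq nat) :
  3 <= n -> perm_eq x (iota 1 n) -> avoids x [:: 1; 2; 3] ->
  ((exists i, [/\ 1 <= i, i <= n - 2,
       size (Act i x [:: 1; 2; 3]) = size (Act i.+1 x [:: 1; 2; 3]) &
       size (Act i.+1 x [:: 1; 2; 3]) <= size (Act i.+2 x [:: 1; 2; 3])])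
   <-> contains_132star x).
Proof.
move=> _ pe av.
have nx : ~ c123 x by move/containsP; apply/negP.
split; [exact: dir_right | exact: dir_left].
Qed.
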